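(* Let $k\geq1$ and let $w,\bar w\in\widetilde W_n$ both be increasing up to $k$ and have the same $k$-truncated A-code, with $\ell(w)=\ell(\bar w)+1$. Suppose that $v(\bar w)=s_iv(w)$ for some simple reflection $s_i$, $i\in\{\Box,1,2,\ldots\}$. Then $\bar w=s_iw$.
   Context: For $n\geq2$, $\widetilde W_n$ is the group of signed permutations $w=(w_1,\ldots,w_n)$ of $\{1,\ldots,n\}$ with an even number of negative entries; $\ell(w)=\#\{i<j\mid w_i>w_j\}+\sum_{w_i<0}(|w_i|-1)$. Left multiplication: for $i\geq1$, $s_iw$ interchanges the values $i,i+1$ (and $-i,-(i+1)$) in $w$; $s_\Box w$ replaces the values $1,2,-1,-2$ by $-2,-1,2,1$ respectively. $w$ is increasing up to $k$ if $|w_1|<w_2<\cdots<w_k$ (vacuous for $k=1$). The A-code is $\gamma_i:=\#\{j>i\mid w_j<w_i\}$ (for $w_1<-1$ the paper uses the A-code of the element obtained by changing the signs of $w_1$ and of the entry $\pm1$; this does not affect entries $\gamma_i$ with $i>k$), and the $k$-truncated A-code is $(\gamma_{k+1},\ldots,\gamma_n)$. $v(w)$ is obtained from $w$ by rearranging $w_{k+1},\ldots,w_n$ in increasing order. *)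

(* Defs.v *)
(* Signed permutations of type D, written as sequences of ints
   (one-line notation w = (w_1,...,w_n), stored 0-based). *)
From mathcomp Require Import all_boot all_order all_algebra.
Set Implicit Arguments. Unset Strict Implicit. Unset Printing Implicit Defensive.
Import Order.TTheory GRing.Theory Num.Theory.
Local Open Scope ring_scope.

Definition inWD (n : nat) (w : seq int) : bool :=
  [&& size w == n,
      perm_eq (map absz w) (iota 1 n)
    & ~~ odd (count (fun x : int => x < 0) w)].

Definition lenD (w : seq int) : nat :=
  (\sum_(i < size w) \sum_(j < size w | (i < j)%N)
      nat_of_bool (nth 0%R w j < nth 0%R w i)%R)%N
  + (\sum_(x <- w | (x < 0)%R) (absz x).-1)%N.

Inductive sref := Box | Sr of nat.

Definition valid_sref (n : nat) (s : sref) : bool :=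
  match s with Box => true | Sr i => (0 < i < n)%N end.

(* action of a simple reflection on values (left multiplication) *)
Definition sval (s : sref) (x : int) : int :=
  match s with
  | Box =>
      if x == 1 then -2 else if x == 2 then -1
      else if x == -1 then 2 else if x == -2 then 1 else x
  | Sr i =>
      if x == i%:Z then i.+1%:Z else if x == i.+1%:Z then i%:Z
      else if x == - i%:Z then - i.+1%:Z
      else if x == - i.+1%:Z then - i%:Z else x
  end.

Definition sact (s : sref) (w : seq int) : seq int := map (sval s) w.

(* w is increasing up to k: |w_1| < w_2 < ... < w_k (vacuous for k = 1);
   0-based: |w[0]| < w[1] < ... < w[k-1]. *)
Definition incr_upto (k : nat) (w : seq int) : Prop :=
  forall j : nat, (j.+1 < minn k (size w))%N ->
    (if j == 0%N then `|nth 0 w 0| else nth 0 w j) < nth 0 w j.+1.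

Definition acode_entry (w : seq int) (i : nat) : nat :=
  count (fun y => y < nth 0 w i) (drop i.+1 w).

Definition tcode (k : nat) (w : seq int) : seq nat :=
  [seq acode_entry w i | i <- iota k (size w - k)].

Definition vperm (k : nat) (w : seq int) : seq int :=
  take k w ++ sort (fun x y : int => x <= y) (drop k w).

(* Main.v *)
Require Import Defs.
From mathcomp Require Import all_boot all_order all_algebra.
Import Order.TTheory GRing.Theory Num.Theory.

Local Open Scope ring_scope.

Fixpoint code (t : seq int) : seq nat :=
  if t is x :: r then count (fun y => y < x) r :: code r else [::].

Lemma tcode_gen (t : seq int) d m : (size t - m)%N = d ->
  map (acode_entry t) (iota m d) = code (drop m t).
Proof.
elim: d m => [|d IH] m Hd /=.
  have Hs : (size t <= m)%N by rewrite -subn_eq0 Hd.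
  by rewrite drop_oversize.
have Hm : (m < size t)%N by rewrite -subn_gt0 Hd.
rewrite (drop_nth 0 Hm) /= IH; last by rewrite subnS Hd.
by [].
Qed.

Lemma tcode_code k w : tcode k w = code (drop k w).
Proof. exact: tcode_gen. Qed.

Lemma code_inj t u : perm_eq t u -> code t = code u -> t = u.
Proof.
have key : forall (a b : int) r q, perm_eq (a :: r) (b :: q) ->
    count (fun y => y < a) r = count (fun y => y < b) q -> ~ a < b.
  move=> a b r q Hp Hc Hab.
  have := permP Hp (fun y => y < b); rewrite /= ltxx Hab add0n add1n -Hc.
  have : (count (fun y : int => (y < a)%R) r <= count (fun y : int => (y < b)%R) r)%N.
    by apply: (@sub_count int) => y /= Hy; exact: lt_trans Hy Hab.
  move=> Hle Heq; move: Hle; rewrite -Heq ltnn //.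
elim: t u => [|x r IH] [|y q] //; try by move/perm_size.
move=> Hp /= [Hc Hcr].
have Hxy : x = y.
  have Hp' : perm_eq (y :: q) (x :: r) by rewrite perm_sym.
  case: (ltgtP x y) => // H.
  + by case: (key _ _ _ _ Hp Hc H).
  + by case: (key _ _ _ _ (Hp' ) (esym Hc) H).
subst y; congr (_ :: _); apply: IH => //.
by rewrite -(perm_cons x).
Qed.

Lemma sorted_mono {f : int -> int} {l : seq int} :
  sorted <%R l -> sorted (relpre f <%R) l ->
  {in l &, forall x y, x < y -> f x < f y}.
Proof.
elim: l => [|z l IH] //= H1 H2.
have T1 : transitive (@Order.lt _ int) by move=> ???; apply: lt_trans.
have T2 : transitive (relpre f (@Order.lt _ int)) by move=> ??? /=; apply: lt_trans.
move: H1 H2; rewrite (path_sortedE T1) (path_sortedE T2).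
move=> /andP[A1 S1] /andP[A2 S2] x y; rewrite !inE.
move=> /predU1P[->|Hx] /predU1P[->|Hy] Hxy.
- by rewrite ltxx in Hxy.
- by move/allP: A2 => /(_ _ Hy).
- by move/allP: A1 => /(_ _ Hx) H; move: (lt_trans H Hxy); rewrite ltxx.
- exact: IH.
Qed.

Lemma code_map (f : int -> int) t : {in t &, forall x y, x < y -> f x < f y} ->
  code (map f t) = code t.
Proof.
move=> Hm.
have E : {in t &, forall x y, (f x < f y) = (x < y)}.
  move=> x y Hx Hy; apply/idP/idP; last exact: Hm.
  move=> H; case: (ltgtP x y) => // H'.
  - by move: (lt_trans H (Hm _ _ Hy Hx H')); rewrite ltxx.
  - by move: H; rewrite H' ltxx.
elim: t Hm E => [|x r IH] //= Hm E.
congr (_ :: _).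
- rewrite count_map; apply: eq_in_count => y Hy /=.
  by apply: E; rewrite inE ?eqxx ?Hy ?orbT.
- apply: IH => a b Ha Hb; [apply: Hm | apply: E]; by rewrite inE ?Ha ?Hb orbT.
Qed.

Lemma inWD_uniq n w : inWD n w -> uniq w.
Proof.
case/and3P=> _ Hp _; apply: (@map_uniq _ _ absz).
by rewrite (perm_uniq Hp) iota_uniq.
Qed.

Lemma sort_lt (t : seq int) : uniq t ->
  sorted <%R (sort (fun x y : int => x <= y) t).
Proof.
move=> Hu; rewrite lt_sorted_uniq_le sort_uniq Hu /=.
exact: (sort_sorted (@le_total _ int)).
Qed.

Theorem lemma12 (n k : nat) (w wb : seq int) (s : sref) :
  (2 <= n)%N -> (1 <= k)%N ->
  inWD n w -> inWD n wb ->
  incr_upto k w -> incr_upto k wb ->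
  tcode k w = tcode k wb ->
  lenD w = (lenD wb).+1 ->
  valid_sref n s ->
  vperm k wb = sact s (vperm k w) ->
  wb = sact s w.
Proof.
move=> _ _ Hw Hwb _ _ Hc _ _ Hv.
have Sw : size w = n by case/and3P: Hw => /eqP.
have Swb : size wb = n by case/and3P: Hwb => /eqP.
have Uw : uniq w by exact: (@inWD_uniq n w Hw).
have Uwb : uniq wb by exact: (@inWD_uniq n wb Hwb).
move: Hv; rewrite /vperm /sact map_cat => /eqP.
rewrite eqseq_cat; last by rewrite size_map !size_take Sw Swb.
case/andP=> /eqP Ht /eqP Hs.
set le := (fun x y : int => x <= y) in Hs.
have L1 := sort_lt _ (drop_uniq k Uw).
have L2 := sort_lt _ (drop_uniq k Uwb).
rewrite Hs sorted_map in L2.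
have M := sorted_mono L1 L2.
have M' : {in drop k w &, forall x y, x < y -> Defs.sval s x < Defs.sval s y}.
  by move=> x y Hx Hy; apply: M; rewrite mem_sort.
have P : perm_eq (drop k wb) (map (Defs.sval s) (drop k w)).
  rewrite -(perm_sort le) Hs; apply: perm_map; by rewrite perm_sort.
have Hd : drop k wb = map (Defs.sval s) (drop k w).
  apply: code_inj P _.
  by rewrite code_map // -!tcode_code Hc.
by rewrite -(cat_take_drop k wb) Ht Hd -map_cat cat_take_drop.
Qed.
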